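(* Let $S$ be an inverse monoid with zero, let $R$ be a unital ring, and let $\theta\colon S\to R$ be a representation. Let $\beta\colon S\to\mathsf{B}(S)$ be the Booleanization of $S$. Then there is a unique additive representation $\theta^{\ast}\colon\mathsf{B}(S)\to R$ such that $\theta^{\ast}(\beta(s))=\theta(s)$ for all $s\in S$.
   Context: A representation of an inverse monoid with zero $S$ in a unital ring $R$ is a monoid homomorphism from $S$ to the multiplicative monoid of $R$ mapping zero to $0$. Elements $a,b$ are orthogonal if $a^{-1}b=0=ab^{-1}$, compatible if $a^{-1}b,ab^{-1}$ are idempotents. A Boolean inverse monoid is an inverse monoid with zero having joins of compatible pairs (natural partial order), multiplication distributing over them, and idempotents forming a generalized Boolean algebra. If $S$ is a Boolean inverse monoid, a representation $\phi\colon S\to R$ is additive if $a\perp b$ implies $\phi(a\vee b)=\phi(a)+\phi(b)$. The Booleanization of $S$ is the Boolean inverse semigroup $\mathsf{B}(S)$ with an injective zero-preserving homomorphism $\beta$ such that every zero-preserving homomorphism from $S$ to a Boolean inverse semigroup $T$ factors uniquely as $\gamma\circ\beta$ with $\gamma$ a zero-preserving homomorphism preserving joins of compatible pairs; when $S$ is a monoid, $\mathsf{B}(S)$ is a monoid and $\beta$ a monoid homomorphism. *)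

(* Defs.v *)
From mathcomp Require Import all_boot all_algebra.
Set Implicit Arguments.
Unset Strict Implicit.
Unset Printing Implicit Defensive.
Import GRing.Theory.

Record InvSemigroup0 := {
  isg_car :> Type;
  isg_mul : isg_car -> isg_car -> isg_car;
  isg_inv : isg_car -> isg_car;
  isg_zero : isg_car;
  isg_mulA : forall a b c, isg_mul a (isg_mul b c) = isg_mul (isg_mul a b) c;
  isg_inv1 : forall a, isg_mul (isg_mul a (isg_inv a)) a = a;
  isg_inv2 : forall a, isg_mul (isg_mul (isg_inv a) a) (isg_inv a) = isg_inv a;
  isg_inv_uniq : forall a b, isg_mul (isg_mul a b) a = a ->
                   isg_mul (isg_mul b a) b = b -> b = isg_inv a;
  isg_mul0l : forall a, isg_mul isg_zero a = isg_zero;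
  isg_mul0r : forall a, isg_mul a isg_zero = isg_zero
}.

Record InvMonoid0 := {
  im_sg :> InvSemigroup0;
  im_one : im_sg;
  im_mul1l : forall a, isg_mul im_one a = a;
  im_mul1r : forall a, isg_mul a im_one = a
}.

Section Notions.
Variable S : InvSemigroup0.
Local Notation "a * b" := (isg_mul a b).
Local Notation "a ^-1" := (isg_inv a).

Definition idem (e : S) : Prop := e * e = e.

(* natural partial order: a <= b iff a = b a^-1 a (i.e. a = b e, e idempotent) *)
Definition nle (a b : S) : Prop := a = b * (a^-1 * a).

Definition orthogonal (a b : S) : Prop :=
  a^-1 * b = isg_zero S /\ a * b^-1 = isg_zero S.

Definition compatible (a b : S) : Prop := idem (a^-1 * b) /\ idem (a * b^-1).

Definition is_join (a b j : S) : Prop :=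
  nle a j /\ nle b j /\ forall c, nle a c -> nle b c -> nle j c.

Definition is_joinE (e f j : S) : Prop :=
  idem j /\ nle e j /\ nle f j /\ forall c, idem c -> nle e c -> nle f c -> nle j c.

(* E(S) (meets are products, bottom is 0) is a generalized Boolean algebra:
   a distributive lattice with least element in which every interval [0,f]
   is complemented. *)
Definition idem_gen_boolean : Prop :=
  (forall e f, idem e -> idem f -> exists j, is_joinE e f j) /\
  (forall e f g j, idem e -> idem f -> idem g -> is_joinE f g j ->
       is_joinE (e * f) (e * g) (e * j)) /\
  (forall e f, idem e -> idem f -> nle e f ->
       exists g, idem g /\ e * g = isg_zero S /\ is_joinE e g f).

Definition is_boolean : Prop :=
  (forall a b, compatible a b -> exists j, is_join a b j) /\
  (forall a b j c, compatible a b -> is_join a b j ->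
       is_join (c * a) (c * b) (c * j) /\ is_join (a * c) (b * c) (j * c)) /\
  idem_gen_boolean.
End Notions.

Definition zhom (S T : InvSemigroup0) (f : S -> T) : Prop :=
  (forall a b, f (isg_mul a b) = isg_mul (f a) (f b)) /\ f (isg_zero S) = isg_zero T.

Definition preserves_compatible_joins (S T : InvSemigroup0) (f : S -> T) : Prop :=
  forall a b j, compatible a b -> is_join a b j -> is_join (f a) (f b) (f j).

Definition monoid_hom (S T : InvMonoid0) (f : S -> T) : Prop :=
  (forall a b, f (isg_mul a b) = isg_mul (f a) (f b)) /\ f (im_one S) = im_one T.

Definition is_booleanization (S B : InvMonoid0) (beta : S -> B) : Prop :=
  is_boolean B /\ zhom beta /\ monoid_hom beta /\ injective beta /\
  forall (T : InvSemigroup0) (f : S -> T), is_boolean T -> zhom f ->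
    exists! g : B -> T, zhom g /\ preserves_compatible_joins g /\
                        forall s, g (beta s) = f s.

Definition representation (S : InvMonoid0) (R : pzRingType) (th : S -> R) : Prop :=
  (forall a b, th (isg_mul a b) = (th a * th b)%R) /\
  th (im_one S) = 1%R /\ th (isg_zero S) = 0%R.

Definition additive_rep (B : InvMonoid0) (R : pzRingType) (th : B -> R) : Prop :=
  representation th /\
  forall a b j, orthogonal a b -> is_join a b j -> th j = (th a + th b)%R.

(* Main.v *)
Require Import Defs.
From mathcomp Require Import all_boot all_algebra.
From Stdlib Require Import ClassicalEpsilon ProofIrrelevance FunctionalExtensionality.
Set Implicit Arguments.
Unset Strict Implicit.
Unset Printing Implicit Defensive.
Import GRing.Theory.

Section InvTheory.
Variable S : InvSemigroup0.
Local Notation "a * b" := (isg_mul a b).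
Local Notation "a ^-1" := (isg_inv a).
Local Notation z := (isg_zero S).

Lemma mA (a b c : S) : a * (b * c) = a * b * c. Proof. exact: isg_mulA. Qed.
Lemma i1 (a : S) : a * a^-1 * a = a. Proof. exact: isg_inv1. Qed.
Lemma i2 (a : S) : a^-1 * a * a^-1 = a^-1. Proof. exact: isg_inv2. Qed.
Lemma i1x (x a : S) : x * a * a^-1 * a = x * a. Proof. by rewrite -!mA (mA a) i1. Qed.
Lemma i2x (x a : S) : x * a^-1 * a * a^-1 = x * a^-1. Proof. by rewrite -!mA (mA _ a) i2. Qed.
Lemma iu (a b : S) : a * b * a = a -> b * a * b = b -> b = a^-1.
Proof. exact: isg_inv_uniq. Qed.

Lemma invK (a : S) : (a^-1)^-1 = a.
Proof. symmetry; apply: iu; [exact: i2| exact: i1]. Qed.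

Lemma idem_inv (e : S) : idem e -> e^-1 = e.
Proof. rewrite /idem => he. symmetry; apply: iu; by rewrite !he. Qed.

Lemma mee (x e : S) : idem e -> x * e * e = x * e.
Proof. by move=> he; rewrite -mA he. Qed.

Lemma idem_mul (e f : S) : idem e -> idem f -> idem (e * f).
Proof.
move=> he hf; set x := (e * f)^-1.
have hx : f * x * e = x.
  apply: iu.
    rewrite !mA (mee _ hf) (mee _ he) -(mA (e * f * x) e f) /x.
    by rewrite i1.
  by rewrite !mA (mee _ he) (mee _ hf) -(mA (f * x) e f) /x i2x.
have xi : idem x.
  have : (f*x*e)*(f*x*e) = f*x*e.
    by rewrite !mA -(mA (f * x) e f) /x i2x.
  by rewrite hx.
have : x^-1 = x by exact: idem_inv.
by rewrite /x invK => ->.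
Qed.

Lemma idem_comm (e f : S) : idem e -> idem f -> e * f = f * e.
Proof.
move=> he hf.
have hef := idem_mul he hf.
rewrite -(idem_inv hef); symmetry; apply: iu.
  by rewrite !mA (mee _ hf) (mee _ he) -mA hef.
by rewrite !mA (mee _ he) (mee _ hf) -mA (idem_mul hf he).
Qed.

Lemma mcomm (x e f : S) : idem e -> idem f -> x * e * f = x * f * e.
Proof. by move=> he hf; rewrite -!mA (idem_comm he hf). Qed.

Lemma idem_r (a : S) : idem (a * a^-1).
Proof. by rewrite /idem mA i1. Qed.
Lemma idem_l (a : S) : idem (a^-1 * a).
Proof. by rewrite /idem mA i2. Qed.

Lemma inv_mul (a b : S) : (a * b)^-1 = b^-1 * a^-1.
Proof.
symmetry; apply: iu.
  rewrite (_ : a*b*(b^-1*a^-1)*(a*b) = a*((b*b^-1)*(a^-1*a))*b); last by rewrite !mA.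
  by rewrite (idem_comm (idem_r b) (idem_l a)) !mA i1 i1x.
rewrite (_ : b^-1*a^-1*(a*b)*(b^-1*a^-1) = b^-1*((a^-1*a)*(b*b^-1))*a^-1); last by rewrite !mA.
by rewrite (idem_comm (idem_l a) (idem_r b)) !mA i2 i2x.
Qed.

Lemma inv_idem_mul (b e : S) : idem e -> (b * e)^-1 = e * b^-1.
Proof. by move=> he; rewrite inv_mul idem_inv. Qed.

Lemma nle_of (a b e : S) : idem e -> a = b * e -> nle a b.
Proof.
move=> he ->; rewrite /nle inv_idem_mul //.
rewrite (_ : e*b^-1*(b*e) = (e*(b^-1*b))*e); last by rewrite !mA.
by rewrite (idem_comm he (idem_l b)) !mA i1 mee.
Qed.

Lemma conj_idem (b f : S) : idem f -> idem (b^-1 * f * b).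
Proof.
move=> hf; rewrite /idem.
rewrite (_ : b^-1*f*b*(b^-1*f*b) = b^-1*(f*(b*b^-1))*f*b); last by rewrite !mA.
by rewrite -(idem_comm (idem_r b) hf) !mA i2 mee.
Qed.

Lemma idem_pull (b f : S) : idem f -> f * b = b * (b^-1 * f * b).
Proof.
by move=> hf; rewrite !mA (idem_comm (idem_r b) hf) !mA i1x.
Qed.

Lemma nle_ofl (a b f : S) : idem f -> a = f * b -> nle a b.
Proof.
move=> hf ->; apply: (nle_of (e := b^-1 * f * b)); first exact: conj_idem.
exact: idem_pull.
Qed.

Lemma nle_refl (a : S) : nle a a.
Proof. by rewrite /nle mA i1. Qed.

Lemma nle_d (a b : S) : nle a b -> a^-1 * a = b^-1 * b * (a^-1 * a).
Proof.
rewrite /nle => h.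
have E : a^-1*a = (a^-1*a)*(b^-1*b)*(a^-1*a).
  have E0 := congr1 (fun x => x^-1 * x) h; simpl in E0.
  rewrite inv_idem_mul in E0; last exact: idem_l.
  by rewrite {1}E0 !mA.
by rewrite {1}E (idem_comm (idem_l a) (idem_l b)) (mee _ (idem_l a)).
Qed.

Lemma nle_trans (a b c : S) : nle a b -> nle b c -> nle a c.
Proof.
move=> hab hbc; rewrite /nle.
rewrite {1}hab {1}hbc -mA -(nle_d hab) //.
Qed.

Lemma nle_antisym (a b : S) : nle a b -> nle b a -> a = b.
Proof.
move=> hab hba.
have e1 := nle_d hab; have e2 := nle_d hba.
have : a^-1 * a = b^-1 * b.
  by rewrite {1}e1 (idem_comm (idem_l b) (idem_l a)) -e2.
by move=> E; rewrite hab E mA i1.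
Qed.

Lemma nle_mull (a b c : S) : nle a b -> nle (c * a) (c * b).
Proof. move=> h; apply: (nle_of (e := a^-1 * a)); first exact: idem_l. by rewrite -mA -h. Qed.

Lemma nle_mulr (a b c : S) : nle a b -> nle (a * c) (b * c).
Proof.
move=> h; apply: (nle_of (e := c^-1 * (a^-1 * a) * c)); first exact: conj_idem (idem_l a).
by rewrite {1}h -mA (idem_pull c (idem_l a)) !mA.
Qed.

Lemma nle_idem (a e : S) : idem e -> nle a e -> idem a.
Proof.
move=> he h; rewrite /nle in h; rewrite /idem h.
exact: idem_mul he (idem_l a).
Qed.

Lemma nle_idemE (e f : S) : idem e -> (nle e f <-> e = f * e).
Proof. by move=> he; rewrite /nle idem_inv // he. Qed.

End InvTheory.

Lemma hom_inv (S T : InvSemigroup0) (f : S -> T) :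
  (forall a b, f (isg_mul a b) = isg_mul (f a) (f b)) ->
  forall a, f (isg_inv a) = isg_inv (f a).
Proof.
move=> hm a; apply: iu; by rewrite -!hm ?i1 ?i2.
Qed.



Section BoolTheory.
Variable B : InvSemigroup0.
Hypothesis hB : is_boolean B.
Local Notation "a * b" := (isg_mul a b).
Local Notation "a ^-1" := (isg_inv a).
Local Notation z := (isg_zero B).

Lemma join_uniq (a b j j' : B) : is_join a b j -> is_join a b j' -> j = j'.
Proof.
move=> [h1 [h2 h3]] [h1' [h2' h3']]; apply: nle_antisym; [exact: h3 | exact: h3'].
Qed.

Lemma compat_idem (e f : B) : idem e -> idem f -> compatible e f.
Proof.
move=> he hf; rewrite /compatible !idem_inv //; split; exact: idem_mul.
Qed.

Lemma joinE_join (e f m : B) : idem e -> idem f -> is_joinE e f m -> is_join e f m.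
Proof.
move=> he hf [hm [hem [hfm hl]]].
have [k hk] := hB.1 e f (compat_idem he hf).
have km : nle k m by apply: hk.2.2.
have ki : idem k := nle_idem hm km.
have mk : nle m k by apply: hl => //; [exact: hk.1 | exact: hk.2.1].
by rewrite (nle_antisym mk km).
Qed.

Lemma compat_inv1 (a b : B) : compatible a b -> a * b^-1 = b * a^-1.
Proof. by move=> [_ h]; rewrite -{1}(idem_inv h) inv_mul invK. Qed.
Lemma compat_inv2 (a b : B) : compatible a b -> a^-1 * b = b^-1 * a.
Proof. by move=> [h _]; rewrite -{1}(idem_inv h) inv_mul invK. Qed.

Lemma compat_meet (a b : B) : compatible a b -> b * (a^-1 * a) = a * (b^-1 * b).
Proof.
move=> hc.
have E1 := compat_inv1 hc; have E2 := compat_inv2 hc.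
have L : b * (a^-1 * a) = a * a^-1 * b.
  by rewrite mA -E1 -mA -E2 mA.
have R : a * (b^-1 * b) = a * a^-1 * b.
  transitivity (a * (a^-1 * a) * (b^-1 * b)); first by rewrite !mA i1.
  rewrite -mA (idem_comm (idem_l a) (idem_l b)).
  transitivity ((a * b^-1) * (b * a^-1) * a); first by rewrite !mA.
  rewrite -E1 hc.2 -mA -E2 mA //.
by rewrite L R.
Qed.

Lemma compat_l (a b : B) : compatible a b -> a^-1 * b = a^-1 * b * ((a^-1 * a) * (b^-1 * b)).
Proof.
move=> hc; have E2 := compat_inv2 hc.
have h1 : a^-1 * b = a^-1 * b * (a^-1 * a).
  by rewrite E2 mA i1x.
by rewrite mA -h1 mA i1x.
Qed.

Variable R : pzRingType.
Variable phi : B -> R.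
Hypothesis phiM : forall a b, phi (a * b) = (phi a * phi b)%R.
Hypothesis phiA : forall a b j, Defs.orthogonal a b -> is_join a b j -> phi j = (phi a + phi b)%R.

Lemma phi_join (a b j : B) : compatible a b -> is_join a b j ->
  phi j = (phi a + phi b - phi (isg_mul b (isg_mul (isg_inv a) a)))%R.
Proof.
move=> hc hj.
set da := a^-1 * a; set db := b^-1 * b; set e := da * db.
have hda : idem da := idem_l a. have hdb : idem db := idem_l b.
have he : idem e := idem_mul hda hdb.
have edb : nle e db.
  apply/(nle_idemE _ he); rewrite /e (idem_comm hda hdb) mA.
  by rewrite hdb.
have [g [hg [eg hjg]]] := hB.2.2.2.2 e db he hdb edb.
have gdb : g = db * g.
  by have := hjg.2.2.1; move/(nle_idemE _ hg).
have hjg' := joinE_join he hg hjg.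
have oeg : Defs.orthogonal e g.
  by rewrite /Defs.orthogonal !idem_inv.
have H1 := phiA oeg hjg'.
have ag : a * g = z.
  rewrite gdb (_ : a = a * da); last by rewrite /da mA i1.
  by rewrite -(mA a da) (mA da db g) -/e eg isg_mul0r.
have oab : Defs.orthogonal a (b * g).
  split.
    rewrite mA (compat_l hc) -/da -/db -/e -(mA _ e g) eg.
    by rewrite isg_mul0r.
  by rewrite inv_idem_mul // mA ag isg_mul0l.
have bgb : nle (b * g) b by apply: (nle_of hg).
have bea : b * e = b * da.
  by rewrite /e (idem_comm hda hdb) mA /db (mA b b^-1 b) i1.
have jn : is_join a (b * g) j.
  split; first exact: hj.1.
  split; first exact: nle_trans bgb hj.2.1.
  move=> c ac bgc; apply: hj.2.2 => //.
  have [hd _] := (hB.2.1 e g db b (compat_idem he hg) hjg').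
  have -> : b = b * db by rewrite /db mA i1.
  apply: hd.2.2 => //.
  rewrite bea compat_meet //; apply: nle_trans ac.
  exact: nle_of hdb _.
rewrite (phiA oab jn) phiM.
have -> : phi g = (phi db - phi e)%R by rewrite H1 addrC addKr.
rewrite mulrBr -!phiM bea.
have -> : b * db = b by rewrite /db mA i1.
by rewrite addrA.
Qed.
End BoolTheory.

Local Open Scope ring_scope.

Section Cons.
Variable M : InvSemigroup0.
Variable R : pzRingType.
Variable psi : M -> R.
Hypothesis psiM : forall a b, psi (isg_mul a b) = psi a * psi b.

Inductive Gen : R -> Prop :=
| GE (e : M) : idem e -> Gen (psi e)
| G1 : Gen 1
| GM p q : Gen p -> Gen q -> Gen (p * q)
| GC p : Gen p -> Gen (1 - p).

Lemma psiMx (x : R) a b : x * psi a * psi b = x * psi (isg_mul a b).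
Proof. by rewrite psiM mulrA. Qed.

Lemma Gen_commE p : Gen p -> forall e, idem e -> p * psi e = psi e * p.
Proof.
elim=> [f hf|||] .
- by move=> e he; rewrite -!psiM (idem_comm hf he).
- by move=> e _; rewrite mul1r mulr1.
- move=> p1 q _ IHp _ IHq e he.
  by rewrite -mulrA IHq // mulrA IHp // mulrA.
- move=> p1 _ IH e he. by rewrite mulrBl mulrBr mul1r mulr1 IH.
Qed.

Lemma Gen_comm p q : Gen p -> Gen q -> p * q = q * p.
Proof.
move=> hp; elim=> [f hf|||].
- exact: Gen_commE.
- by rewrite mul1r mulr1.
- move=> q1 q2 _ IH1 _ IH2.
  by rewrite mulrA IH1 -mulrA IH2 mulrA.
- move=> q1 _ IH. by rewrite mulrBl mulrBr mul1r mulr1 IH.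
Qed.

Lemma Gen_idem p : Gen p -> p * p = p.
Proof.
elim=> [f hf|||].
- by rewrite -psiM hf.
- by rewrite mulr1.
- move=> p1 q1 hp IHp hq IHq.
  by rewrite mulrA -(mulrA p1 q1 p1) (Gen_comm hq hp) mulrA IHp -mulrA IHq.
- move=> p1 _ IH. by rewrite mulrBl !mulrBr !mul1r !mulr1 IH subrr subr0.
Qed.

Lemma Gen0 : Gen 0.
Proof. by rewrite -(subrr (1 : R)); apply: GC; exact: G1. Qed.

Lemma Gen_sum e f : Gen e -> Gen f -> e * f = 0 -> Gen (e + f).
Proof.
move=> he hf ef.
have -> : e + f = 1 - (1 - e) * (1 - f).
  rewrite mulrBl !mulrBr !mul1r !mulr1 ef subr0.
  by rewrite opprB addrCA opprB (addrC 1 (f - 1)) subrK.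
apply: GC; apply: GM; exact: GC.
Qed.

Lemma Gen_conj s p : Gen p -> Gen (psi s * p * psi (isg_inv s)).
Proof.
elim=> [e he|||].
- rewrite -!psiM; apply: GE.
  by have := conj_idem (isg_inv s) he; rewrite invK.
- rewrite mulr1 -psiM; apply: GE; exact: idem_r.
- move=> p1 q1 hp IHp hq IHq.
  have -> : psi s * (p1 * q1) * psi (isg_inv s) =
            (psi s * p1 * psi (isg_inv s)) * (psi s * q1 * psi (isg_inv s)).
    symmetry; rewrite !mulrA -(mulrA _ (psi (isg_inv s)) (psi s)) -psiM.
    rewrite -(mulrA (psi s) p1 (psi _)) (Gen_commE hp (idem_l s)).
    by rewrite (mulrA (psi s) (psi _) p1) -psiM mA i1.
  exact: GM.
- move=> p1 hp IH.
  have -> : psi s * (1 - p1) * psi (isg_inv s) =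
            psi (isg_mul s (isg_inv s)) * (1 - psi s * p1 * psi (isg_inv s)).
    rewrite !mulrBr !mulrBl !mulr1 !mulrA -(psiM s (isg_inv s)).
    by rewrite -(psiM (isg_mul s (isg_inv s)) s) i1.
  apply: GM; [apply: GE; exact: idem_r | exact: GC].
Qed.

Lemma Gen_conj' s p : Gen p -> Gen (psi (isg_inv s) * p * psi s).
Proof. by move=> hp; have := Gen_conj (isg_inv s) hp; rewrite invK. Qed.

Definition Pair (x y : R) : Prop :=
  [/\ x * y * x = x, y * x * y = y &
      forall p, Gen p -> Gen (x * p * y) /\ Gen (y * p * x)].

Lemma Pair_sym x y : Pair x y -> Pair y x.
Proof. by case=> h1 h2 h3; split=> // p hp; have [] := h3 p hp. Qed.

Lemma Pair_xy x y : Pair x y -> Gen (x * y).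
Proof. by case=> _ _ h; have [] := h 1 G1; rewrite mulr1. Qed.
Lemma Pair_yx x y : Pair x y -> Gen (y * x).
Proof. by move/Pair_sym; exact: Pair_xy. Qed.

Lemma cross (x y p v : R) : x * y * x = x -> Gen (y * x) -> Gen p -> x * v = 0 ->
  x * p * v = 0.
Proof.
move=> hx hyx hp hv.
transitivity (x * ((y * x) * p) * v); first by rewrite !mulrA hx.
by rewrite -(Gen_comm hp hyx) -!mulrA hv !mulr0.
Qed.

Lemma cross0 (x y u v : R) : x * y * x = x -> y * x * y = y -> u * v * u = u ->
  Gen (v * u) -> Gen (y * x) -> x * v = 0 -> u * y = 0.
Proof.
move=> hx hy hu hvu hyx hxv.
transitivity (u * ((v * u) * (y * x)) * y); first by rewrite !mulrA hu -(mulrA u y x) -(mulrA u (y * x) y) hy.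
rewrite (Gen_comm hvu hyx).
transitivity ((u * y) * (x * v) * (u * y)); first by rewrite !mulrA.
by rewrite hxv mulr0 mul0r.
Qed.

Inductive GP : R -> R -> Prop :=
| GPs s : GP (psi s) (psi (isg_inv s))
| GPg p : Gen p -> GP p p
| GPm x y u v : GP x y -> GP u v -> GP (x * u) (v * y)
| GPa x y u v : GP x y -> GP u v -> y * u = 0 -> x * v = 0 -> GP (x + u) (y + v).

Lemma GP_sym x y : GP x y -> GP y x.
Proof.
elim=> {x y} [s|p hp|x y u v _ IH1 _ IH2|x y u v _ IH1 _ IH2 h1 h2].
- by have := GPs (isg_inv s); rewrite invK.
- exact: GPg.
- exact: GPm.
- exact: GPa.
Qed.

Lemma GP_Pair x y : GP x y -> Pair x y.
Proof.
elim=> {x y} [s|p hp|x y u v _ [h1 h2 h3] _ [k1 k2 k3]|x y u v _ [h1 h2 h3] _ [k1 k2 k3] hyu hxv].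
- split.
  + by rewrite -!psiM i1.
  + by rewrite -!psiM i2.
  + move=> p hp; split; [exact: Gen_conj | exact: Gen_conj'].
- have pp := Gen_idem hp.
  split; rewrite ?pp //.
  move=> q hq; rewrite -mulrA (Gen_comm hq hp) mulrA pp.
  by split; apply: GM.
- have hyx : Gen (y * x) := Pair_yx (And3 h1 h2 h3).
  have huv : Gen (u * v) := Pair_xy (And3 k1 k2 k3).
  have hxy : Gen (x * y) := Pair_xy (And3 h1 h2 h3).
  have hvu : Gen (v * u) := Pair_yx (And3 k1 k2 k3).
  split.
  + transitivity (x * ((u * v) * (y * x)) * u); first by rewrite !mulrA.
    rewrite (Gen_comm huv hyx) !mulrA h1 -(mulrA x u v) -(mulrA x (u * v) u) k1.
    done.
  + transitivity (v * ((y * x) * (u * v)) * y); first by rewrite !mulrA.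
    rewrite (Gen_comm hyx huv) !mulrA k2 -(mulrA v y x) -(mulrA v (y * x) y) h2.
    done.
  + move=> p hp; split.
    * have [g1 _] := k3 p hp.
      have [g2 _] := h3 _ g1.
      by move: g2; rewrite !mulrA.
    * have [_ g1] := h3 p hp.
      have [_ g2] := k3 _ g1.
      by move: g2; rewrite !mulrA.
- have hyx : Gen (y * x) := Pair_yx (And3 h1 h2 h3).
  have huv : Gen (u * v) := Pair_xy (And3 k1 k2 k3).
  have hxy : Gen (x * y) := Pair_xy (And3 h1 h2 h3).
  have hvu : Gen (v * u) := Pair_yx (And3 k1 k2 k3).
  have huy : u * y = 0 := cross0 h1 h2 k1 hvu hyx hxv.
  have hvx : v * x = 0 := cross0 h2 h1 k2 huv hxy hyu.
  have E1 : (x + u) * (y + v) = x * y + u * v.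
    by rewrite mulrDl !mulrDr hxv huy addr0 add0r.
  have E2 : (y + v) * (x + u) = y * x + v * u.
    by rewrite mulrDl !mulrDr hyu hvx addr0 add0r.
  split.
  + rewrite E1 mulrDl !mulrDr -!mulrA hyu hvx !mulr0 addr0 add0r !mulrA h1 k1 //.
  + rewrite E2 mulrDl !mulrDr -!mulrA hxv huy !mulr0 addr0 add0r !mulrA h2 k2 //.
  + move=> p hp; split.
    * rewrite !mulrDl !mulrDr (cross h1 hyx hp hxv) (cross k1 hvu hp huy) addr0 add0r.
      have [g1 _] := h3 p hp; have [g2 _] := k3 p hp.
      apply: Gen_sum => //.
      by rewrite -!mulrA (mulrA y u) hyu mul0r !mulr0.
    * rewrite !mulrDl !mulrDr (cross h2 hxy hp hyu) (cross k2 huv hp hvx) addr0 add0r.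
      have [_ g1] := h3 p hp; have [_ g2] := k3 p hp.
      apply: Gen_sum => //.
      by rewrite -!mulrA (mulrA x v) hxv mul0r !mulr0.
Qed.

Definition Reg (x y : R) := [/\ x * y * x = x, y * x * y = y, Gen (x * y) & Gen (y * x)].

Lemma Pair_Reg x y : Pair x y -> Reg x y.
Proof. move=> h; case: (h) => h1 h2 _; split=> //; [exact: Pair_xy | exact: Pair_yx]. Qed.

Lemma pfx3 (a b c d z : R) : a * b * c = d -> z * a * b * c = z * d.
Proof. by move=> h; rewrite -h !mulrA. Qed.

Lemma reg_uniq x y y' : Reg x y -> Reg x y' -> y = y'.
Proof.
move=> [h1 h2 h3 h4] [k1 k2 k3 k4].
have E1 : y = y' * x * y.
  transitivity (y * (x * y' * x) * y); first by rewrite k1 h2.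
  transitivity ((y * x) * (y' * x) * y); first by rewrite !mulrA.
  by rewrite (Gen_comm h4 k4) !mulrA (pfx3 _ h2).
have E2 : y' = y' * x * y.
  transitivity (y' * (x * y * x) * y'); first by rewrite h1 k2.
  transitivity (y' * ((x * y) * (x * y'))); first by rewrite !mulrA.
  by rewrite (Gen_comm h3 k3) !mulrA k2.
by rewrite E1 -E2.
Qed.

Definition inT (x : R) : Prop := exists y, GP x y.

Definition pinv (x : R) : R := epsilon (inhabits 0) (fun y => GP x y).

Lemma pinv_spec x : inT x -> GP x (pinv x).
Proof. move=> h; exact: (epsilon_spec (inhabits 0) (fun y => GP x y) h). Qed.

Lemma GP_pinv x y : GP x y -> pinv x = y.
Proof.
move=> h; have h' := pinv_spec (ex_intro _ y h).
apply: reg_uniq; apply: Pair_Reg; apply: GP_Pair; eassumption.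
Qed.

Lemma inT_Pair x : inT x -> Pair x (pinv x).
Proof. by move/pinv_spec/GP_Pair. Qed.

Lemma inT_idem z : inT z -> z * z = z -> Gen z.
Proof.
move=> hz zz; have P := inT_Pair hz; case: (P) => h1 h2 _.
have gw : Gen (pinv z).
  have E0 : pinv z = (pinv z * z) * (z * pinv z).
    by rewrite !mulrA -(mulrA (pinv z) z z) zz.
  rewrite E0.
  apply: GM; [exact: Pair_yx P | exact: Pair_xy P].
have E : z = pinv z.
  apply: (@reg_uniq (pinv z)); apply: Pair_Reg; first exact: Pair_sym P.
  apply: GP_Pair; exact: GPg.
by rewrite E.
Qed.

Lemma inT_mul x y : inT x -> inT y -> inT (x * y).
Proof. move=> [x' hx] [y' hy]; exists (y' * x'); exact: GPm. Qed.
Lemma inT_inv x : inT x -> inT (pinv x).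
Proof. move=> h; exists x; apply: GP_sym; exact: pinv_spec. Qed.
Lemma inT_Gen p : Gen p -> inT p.
Proof. by move=> h; exists p; exact: GPg. Qed.
Lemma inT_psi s : inT (psi s).
Proof. by exists (psi (isg_inv s)); exact: GPs. Qed.

Definition TTc := {x : R | inT x}.
Definition tval (a : TTc) : R := proj1_sig a.
Lemma tval_inj (a b : TTc) : tval a = tval b -> a = b.
Proof. case: a b => [x hx] [y hy] /= E; subst y; f_equal; apply: proof_irrelevance. Qed.

Definition tmul (a b : TTc) : TTc := exist _ (tval a * tval b) (inT_mul (proj2_sig a) (proj2_sig b)).
Definition tinv (a : TTc) : TTc := exist _ (pinv (tval a)) (inT_inv (proj2_sig a)).
Definition tzero : TTc := exist _ 0 (inT_Gen Gen0).

Lemma tmulA a b c : tmul a (tmul b c) = tmul (tmul a b) c.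
Proof. by apply: tval_inj; rewrite /= mulrA. Qed.
Lemma tinv1 a : tmul (tmul a (tinv a)) a = a.
Proof. by apply: tval_inj; case: (inT_Pair (proj2_sig a)). Qed.
Lemma tinv2 a : tmul (tmul (tinv a) a) (tinv a) = tinv a.
Proof. by apply: tval_inj; case: (inT_Pair (proj2_sig a)). Qed.
Lemma tinv_uniq a b : tmul (tmul a b) a = a -> tmul (tmul b a) b = b -> b = tinv a.
Proof.
move=> /(congr1 tval) /= h1 /(congr1 tval) /= h2; apply: tval_inj => /=.
have gxy : Gen (tval a * tval b).
  apply: inT_idem; first exact: inT_mul (proj2_sig a) (proj2_sig b).
  by rewrite mulrA h1.
have gyx : Gen (tval b * tval a).
  apply: inT_idem; first exact: inT_mul (proj2_sig b) (proj2_sig a).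
  by rewrite mulrA h2.
apply: (@reg_uniq (tval a)); first by split.
exact: Pair_Reg (inT_Pair (proj2_sig a)).
Qed.
Lemma tmul0l a : tmul tzero a = tzero.
Proof. by apply: tval_inj; rewrite /= mul0r. Qed.
Lemma tmul0r a : tmul a tzero = tzero.
Proof. by apply: tval_inj; rewrite /= mulr0. Qed.

Definition TT : InvSemigroup0 :=
  Build_InvSemigroup0 tmulA tinv1 tinv2 tinv_uniq tmul0l tmul0r.

Definition tpsi (s : M) : TT := exist _ (psi s) (inT_psi s).

Local Notation "a ** b" := (@isg_mul TT a b) (at level 40, left associativity).

Lemma idemT (a : TT) : idem a <-> Gen (tval a).
Proof.
split.
  move=> h; apply: inT_idem; first exact: proj2_sig a.
  exact: (congr1 tval h).
by move=> h; apply: tval_inj; rewrite /= Gen_idem.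
Qed.

Lemma nleT (a b : TT) : nle a b <-> tval a = tval b * (pinv (tval a) * tval a).
Proof.
split; first by move=> h; exact: (congr1 tval h).
by move=> h; apply: tval_inj.
Qed.

Lemma orthT (p q : TT) : Defs.orthogonal p q <->
  pinv (tval p) * tval q = 0 /\ tval p * pinv (tval q) = 0.
Proof.
split; first by case=> h1 h2; split; [exact: (congr1 tval h1) | exact: (congr1 tval h2)].
by case=> h1 h2; split; apply: tval_inj.
Qed.

Lemma orth_more (p q : TT) : Defs.orthogonal p q ->
  tval q * pinv (tval p) = 0 /\ pinv (tval q) * tval p = 0.
Proof.
move/orthT=> [h1 h2].
have [a1 a2 _] := inT_Pair (proj2_sig p).
have [b1 b2 _] := inT_Pair (proj2_sig q).
have P := inT_Pair (proj2_sig p); have Q := inT_Pair (proj2_sig q).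
split.
  exact: (cross0 a1 a2 b1 (Pair_yx Q) (Pair_yx P) h2).
exact: (cross0 a2 a1 b2 (Pair_xy Q) (Pair_xy P) h1).
Qed.

Lemma inT_orth (p q : TT) : Defs.orthogonal p q -> inT (tval p + tval q).
Proof.
move=> /orthT [h1 h2]; exists (pinv (tval p) + pinv (tval q)).
apply: GPa => //; apply: pinv_spec; exact: proj2_sig.
Qed.

Lemma pinv_orth (p q : TT) : Defs.orthogonal p q ->
  pinv (tval p + tval q) = pinv (tval p) + pinv (tval q).
Proof.
move=> /orthT [h1 h2]; apply: GP_pinv.
apply: GPa => //; apply: pinv_spec; exact: proj2_sig.
Qed.

Lemma orth_join (p q s : TT) : Defs.orthogonal p q -> tval s = tval p + tval q ->
  is_join p q s.
Proof.
move=> ho hs.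
have [h1 h2] := orthT p q; have {h1 h2} [o1 o2] := h1 ho.
have [o3 o4] := orth_more ho.
have [a1 a2 _] := inT_Pair (proj2_sig p).
have [b1 b2 _] := inT_Pair (proj2_sig q).
have hsi : pinv (tval s) = pinv (tval p) + pinv (tval q) by rewrite hs pinv_orth.
split; last split.
- apply/nleT; rewrite hs mulrDl mulrA a1 mulrA o3 mul0r addr0 //.
- apply/nleT; rewrite hs mulrDl mulrA o2 mul0r add0r mulrA b1 //.
- move=> d /nleT hp /nleT hq; apply/nleT.
  rewrite hsi hs mulrDl (mulrDr (pinv (tval p))) (mulrDr (pinv (tval q))) o1 o4.
  by rewrite addr0 add0r mulrDr -hp -hq.
Qed.

Definition tG (p : R) (hp : Gen p) : TT := exist _ p (inT_Gen hp).

Lemma tzeroE : isg_zero TT = tzero. Proof. by []. Qed.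

Lemma compat_g (a b : TT) : compatible a b ->
  exists g : TT, [/\ idem g, a ** g = isg_zero TT, isg_inv a ** b ** g = isg_zero TT &
     tval g = 1 - pinv (tval a) * tval a].
Proof.
move=> hc.
have P := inT_Pair (proj2_sig a); case: (P) => a1 a2 _.
have hg : Gen (1 - pinv (tval a) * tval a) by apply: GC; exact: Pair_yx P.
exists (tG hg); split => //.
- by apply/idemT.
- apply: tval_inj; rewrite /= mulrBr mulr1 mulrA a1 subrr //.
- apply: tval_inj => /=.
  have gab : Gen (pinv (tval a) * tval b).
    by have := (idemT (isg_inv a ** b)).1 hc.1.
  rewrite (Gen_comm gab hg) mulrBl mul1r -!mulrA (mulrA (tval a)) .
  by rewrite !mulrA a2 subrr.
Qed.

Lemma nle_b_aux (x x' u u' w : R) : u * u' * u = u -> u * (x' * x) = x * (u' * u) ->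
  (1 - x' * x) * (u' * u) = (u' * u) * (1 - x' * x) -> w = 1 - x' * x ->
  u = (x + u * w) * (u' * u).
Proof.
move=> q1 hm cm ->.
rewrite mulrDl -hm -(mulrA u (1 - x' * x)) cm (mulrA u (u' * u)) mulrBr mulr1 !mulrA q1.
by rewrite addrC subrK.
Qed.

Lemma compat_join (a b : TT) : compatible a b ->
  exists g : TT, exists J : TT, [/\ idem g, is_join a b J, Defs.orthogonal a (b ** g),
     a ** g = isg_zero TT /\ isg_inv a ** b ** g = isg_zero TT &
     tval J = tval a + tval (b ** g) /\ tval g = 1 - pinv (tval a) * tval a].
Proof.
move=> hc; have [g [hg ag abg gv]] := compat_g hc.
have ho : Defs.orthogonal a (b ** g).
  split; first by rewrite mA abg.
  by rewrite inv_idem_mul // mA ag isg_mul0l.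
exists g, (exist _ _ (inT_orth ho)); split => //.
have hj := @orth_join a (b ** g) (exist _ _ (inT_orth ho)) ho (erefl _).
split; first exact: hj.1.
split; last first.
  move=> d ad bd; apply: hj.2.2 => //.
  apply: nle_trans bd; exact: nle_of hg _.
apply/nleT => /=.
have Q := inT_Pair (proj2_sig b).
have P := inT_Pair (proj2_sig a).
have hm := congr1 tval (compat_meet hc); rewrite /= in hm.
have q1 : tval b * pinv (tval b) * tval b = tval b by case: Q.
have cm := Gen_comm (GC (Pair_yx P)) (Pair_yx Q).
exact: (nle_b_aux q1 hm cm gv).
Qed.

Lemma TT_dist (a b j c : TT) : compatible a b -> is_join a b j ->
  is_join (c ** a) (c ** b) (c ** j) /\ is_join (a ** c) (b ** c) (j ** c).
Proof.
move=> hc hj.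
have [g [J [hg hJ ho [ag abg] [hJv _]]]] := compat_join hc.
have -> : j = J := join_uniq hj hJ.
split.
- have ho' : Defs.orthogonal (c ** a) (c ** (b ** g)).
    split.
      rewrite inv_mul !mA -(mA (isg_inv a) (isg_inv c) c) -(mA _ (isg_inv c ** c) b).
      rewrite (idem_pull b (idem_l c)) (mA (isg_inv a) b) (mcomm _ (conj_idem b (idem_l c)) hg).
      by rewrite abg !isg_mul0l.
    rewrite inv_mul inv_idem_mul // !mA -(mA c a g) ag isg_mul0r !isg_mul0l.
    done.
  have hcJ : is_join (c ** a) (c ** (b ** g)) (c ** J).
    by apply: (orth_join ho'); rewrite /= hJv mulrDr.
  split; first exact: nle_mull hJ.1.
  split; first exact: nle_mull hJ.2.1.
  move=> d hd1 hd2; apply: hcJ.2.2 => //; apply: nle_trans hd2.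
  rewrite mA; exact: nle_of hg _.
- have ho' : Defs.orthogonal (a ** c) (b ** g ** c).
    split.
      rewrite inv_mul !mA -(mA (isg_inv c) (isg_inv a) b) -(mA (isg_inv c) (isg_inv a ** b) g).
      by rewrite abg isg_mul0r isg_mul0l.
    rewrite inv_mul inv_idem_mul // !mA -(mA a c (isg_inv c)) (mcomm _ (idem_r c) hg) ag.
    by rewrite !isg_mul0l.
  have hcJ : is_join (a ** c) (b ** g ** c) (J ** c).
    by apply: (orth_join ho'); rewrite /= hJv mulrDl.
  split; first exact: nle_mulr hJ.1.
  split; first exact: nle_mulr hJ.2.1.
  move=> d hd1 hd2; apply: hcJ.2.2 => //; apply: nle_trans hd2.
  apply: nle_mulr; exact: nle_of hg _.
Qed.

Lemma zid (V : zmodType) (o p q r : V) : o - ((o - q) - (p - r)) = p + q - r.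
Proof. by rewrite opprB addrCA subKr addrAC. Qed.

Lemma rGen_join p q : Gen p -> Gen q -> Gen (p + q - p * q).
Proof.
move=> hp hq.
have -> : p + q - p * q = 1 - (1 - p) * (1 - q).
  by rewrite mulrBl !mulrBr !mul1r !mulr1 zid.
apply: GC; apply: GM; exact: GC.
Qed.

Lemma joinE_val (e f j : TT) : Gen (tval e) -> Gen (tval f) ->
  tval j = tval e + tval f - tval e * tval f -> is_joinE e f j.
Proof.
move=> hp hq hj.
have ie : idem e by apply/idemT.
have if_ : idem f by apply/idemT.
have pp := Gen_idem hp; have qq := Gen_idem hq.
have pq := Gen_comm hp hq.
have ij : idem j by apply/idemT; rewrite hj; exact: rGen_join.
split; first exact: ij.
split.
  apply/(nle_idemE _ ie); apply: tval_inj; rewrite /= hj.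
  rewrite mulrBl mulrDl pp -pq -(mulrA (tval e) (tval f) (tval e)) -pq mulrA pp.
  by rewrite addrK.
split.
  apply/(nle_idemE _ if_); apply: tval_inj; rewrite /= hj.
  by rewrite mulrBl mulrDl qq -(mulrA (tval e) (tval f) (tval f)) qq addrAC subrr add0r.
move=> c ic /(nle_idemE _ ie) ec /(nle_idemE _ if_) fc.
apply/(nle_idemE _ ij); apply: tval_inj; rewrite /= hj.
have ec' := congr1 tval ec; have fc' := congr1 tval fc; rewrite /= in ec' fc'.
by rewrite mulrBr mulrDr mulrA -ec' -fc'.
Qed.

Lemma rdist (e f g : R) : e * e = e -> f * e = e * f ->
  e * (f + g - f * g) = e * f + e * g - e * f * (e * g).
Proof.
move=> ee fe; rewrite mulrBr mulrDr !mulrA -(mulrA e f e) fe mulrA ee //.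
Qed.

Lemma r3a (p q : R) : p * p = p -> p * q = q * p -> p * (q * (1 - p)) = 0.
Proof.
move=> pp pq; rewrite mulrA pq -mulrA mulrBr mulr1 pp subrr mulr0 //.
Qed.

Lemma r3b (p q : R) : p * p = p -> p = q * p -> p * q = q * p ->
  q = p + q * (1 - p) - p * (q * (1 - p)).
Proof.
move=> pp qp pq; rewrite r3a // subr0 mulrBr mulr1 -qp.
by rewrite addrC subrK.
Qed.

Lemma TT_gen_bool : idem_gen_boolean TT.
Proof.
split.
  move=> e f ie if_.
  have hp := (idemT e).1 ie; have hq := (idemT f).1 if_.
  exists (tG (rGen_join hp hq)); exact: joinE_val.
split.
  move=> e f g j ie if_ ig hj.
  have he := (idemT e).1 ie; have hf := (idemT f).1 if_; have hg := (idemT g).1 ig.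
  have hj0 := @joinE_val f g (tG (rGen_join hf hg)) hf hg (erefl _).
  have E : j = tG (rGen_join hf hg).
    apply: nle_antisym.
      apply: hj.2.2.2 => //; [exact: hj0.1 | exact: hj0.2.1 | exact: hj0.2.2.1].
    apply: hj0.2.2.2 => //; [exact: hj.1 | exact: hj.2.1 | exact: hj.2.2.1].
  rewrite E; apply: joinE_val.
  - by apply/idemT; exact: idem_mul.
  - by apply/idemT; exact: idem_mul.
  - rewrite /=; apply: rdist; [exact: Gen_idem | exact: Gen_comm].
move=> e f ie if_ hef.
have hp := (idemT e).1 ie; have hq := (idemT f).1 if_.
have hg : Gen (tval f * (1 - tval e)) by apply: GM => //; exact: GC.
exists (tG hg); split; first by apply/idemT.
have pp := Gen_idem hp; have pq := Gen_comm hp hq.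
split.
  by apply: tval_inj; rewrite /= r3a.
apply: joinE_val => //.
have := congr1 tval ((nle_idemE _ ie).1 hef); rewrite /= => qp.
exact: r3b.
Qed.

Lemma TT_bool : is_boolean TT.
Proof.
split.
  move=> a b hc; have [g [J [_ hJ _ _ _]]] := compat_join hc; by exists J.
split; last exact: TT_gen_bool.
move=> a b j c hc hj; exact: TT_dist.
Qed.
End Cons.


Lemma hom_compat (S T : InvSemigroup0) (f : S -> T) :
  (forall a b, f (isg_mul a b) = isg_mul (f a) (f b)) ->
  forall a b, compatible a b -> compatible (f a) (f b).
Proof.
move=> hm a b [h1 h2]; split; rewrite /idem -!hom_inv // -!hm.
  by rewrite h1.
by rewrite h2.
Qed.

Lemma orth_compat (S : InvSemigroup0) (a b : S) : Defs.orthogonal a b -> compatible a b.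
Proof. by case=> h1 h2; rewrite /compatible /idem h1 h2 isg_mul0l. Qed.

Section Incl.
Variables (S B : InvSemigroup0) (R : pzRingType) (theta : S -> R) (phi : B -> R)
  (beta : S -> B).
Hypothesis thM : forall a b, theta (isg_mul a b) = theta a * theta b.
Hypothesis phM : forall a b, phi (isg_mul a b) = phi a * phi b.
Hypothesis bM : forall a b, beta (isg_mul a b) = isg_mul (beta a) (beta b).
Hypothesis tb : forall s, phi (beta s) = theta s.

Lemma Gen_incl p : Gen theta p -> Gen phi p.
Proof.
elim=> [e he|||].
- rewrite -tb; apply: GE; by rewrite /idem -bM he.
- exact: G1.
- by move=> *; apply: GM.
- by move=> *; apply: GC.
Qed.

Lemma GP_incl x y : GP theta x y -> GP phi x y.
Proof.
elim=> [s|p hp|x1 y1 u v _ IH1 _ IH2|x1 y1 u v _ IH1 _ IH2 h1 h2].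
- rewrite -!tb (hom_inv bM); exact: GPs.
- by apply: GPg; exact: Gen_incl.
- exact: GPm.
- exact: GPa.
Qed.

Lemma inT_incl x : inT theta x -> inT phi x.
Proof. case=> y h; exists y; exact (GP_incl h). Qed.

Lemma pinv_incl x : inT theta x -> pinv phi x = pinv theta x.
Proof. move=> h; apply: (GP_pinv phM); apply: GP_incl; exact: pinv_spec. Qed.

Definition incl (x : TT thM) : TT phM := exist _ (tval x) (inT_incl (proj2_sig x)).

Lemma inclM : forall a b, incl (isg_mul a b) = isg_mul (incl a) (incl b).
Proof. by move=> a b; apply: tval_inj. Qed.

Lemma incl_join (x y j : TT thM) : compatible x y -> is_join x y j ->
  is_join (incl x) (incl y) (incl j).
Proof.
move=> hc hj.
have [g [J [_ hJ _ _ [hJv gv]]]] := compat_join hc.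
have -> := join_uniq hj hJ.
have hc' := hom_compat inclM hc.
have [g' [J' [_ hJ' _ _ [hJv' gv']]]] := compat_join hc'.
suff -> : incl J = J' by [].
apply: tval_inj; rewrite hJv' /= hJv /= gv gv' /=.
by rewrite pinv_incl //; exact: proj2_sig.
Qed.
End Incl.

Unset Implicit Arguments.
Theorem proposition3p3 (S : InvMonoid0) (R : pzRingType) (theta : S -> R)
  (B : InvMonoid0) (beta : S -> B) :
  representation theta ->
  is_booleanization beta ->
  exists! theta_star : B -> R,
    additive_rep theta_star /\ forall s, theta_star (beta s) = theta s.
Proof.
move=> [thM [th1 th0]] [hB [[bM b0] [[_ b1] [_ UP]]]].
pose f := tpsi thM.
have fz : zhom f.
  by split; [move=> a b; apply: tval_inj; rewrite /= thM | apply: tval_inj; rewrite /= th0].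
have [g [[[gM g0] [gj gb]] guniq]] := UP _ f (TT_bool thM) fz.
exists (fun b => tval (g b)).
have gtb : forall s, tval (g (beta s)) = theta s by move=> s; rewrite gb.
split.
  split; last exact: gtb.
  split.
    split; first by move=> a b; rewrite gM.
    split; first by rewrite -b1 gtb th1.
    by rewrite g0.
  move=> a b j ho hj.
  have hj' := gj a b j (orth_compat ho) hj.
  have ho' : Defs.orthogonal (g a) (g b).
    by case: ho => h1 h2; split; rewrite -(hom_inv gM) -gM ?h1 ?h2 g0.
  have hs := @orth_join _ _ _ thM _ _ (exist _ _ (inT_orth ho')) ho' (erefl _).
  by rewrite (join_uniq hj' hs).
move=> phi [[[phM [ph1 ph0]] phA] phb].
pose Phi := tpsi phM.
have Pz : zhom Phi.
  by split; [move=> a b; apply: tval_inj; rewrite /= phM | apply: tval_inj; rewrite /= ph0].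
have Pj : preserves_compatible_joins Phi.
  move=> a b j hc hj.
  have hc' := hom_compat Pz.1 hc.
  have [g' [J [_ hJ _ _ [hJv gv]]]] := compat_join hc'.
  suff -> : Phi j = J by [].
  apply: tval_inj; rewrite hJv /= gv /=.
  rewrite (phi_join hB phM phA hc hj).
  have -> : pinv phi (phi a) = phi (isg_inv a) by apply: (GP_pinv phM); exact: GPs.
  by rewrite mulrBr mulr1 !phM mulrA addrA.
have fz' : zhom (fun s => Phi (beta s)).
  split; first by move=> a b; rewrite bM Pz.1.
  by rewrite b0 Pz.2.
have [g0' [_ U]] := UP _ (fun s => Phi (beta s)) (TT_bool phM) fz'.
have E1 := U Phi (conj Pz (conj Pj (fun s => erefl _))).
have inclM' := inclM (thM:=thM) phM bM phb.
have E2 : g0' = (fun b => incl (thM:=thM) phM bM phb (g b)).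
  apply: U; split; [|split].
  - split; first by move=> a b; rewrite gM inclM'.
    by rewrite g0; apply: tval_inj.
  - move=> a b j hc hj.
    apply: incl_join; last exact: gj.
    exact (hom_compat gM hc).
  - move=> s; apply: tval_inj; rewrite /= gb /=; by rewrite phb.
apply: functional_extensionality => b.
have := congr1 (fun h => tval (h b)) (etrans (esym E1) E2).
by rewrite /=.
Qed.
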